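(* Let $M,N\in\mathbb{R}^{(k+n)\times(k+n)}$ be symmetric, partitioned as $N=\begin{bmatrix} N_{11} & N_{12}\\ N_{12}^\top & N_{22}\end{bmatrix}$ with $N_{11}\in\mathbb{R}^{k\times k}$, $N_{22}\in\mathbb{R}^{n\times n}$. Assume $N$ is nonsingular, $N_{11}\ge 0$ and $N_{22}<0$. Let $\mathcal{S}_N:=\{Z\in\mathbb{R}^{n\times k}\mid \begin{bmatrix} I\\ Z\end{bmatrix}^\top N\begin{bmatrix} I\\ Z\end{bmatrix}\ge 0\}$. Then $\begin{bmatrix} I\\ Z\end{bmatrix}^\top M\begin{bmatrix} I\\ Z\end{bmatrix}>0$ for all $Z\in\mathcal{S}_N$ if and only if there exists $\alpha\ge 0$ such that $M-\alpha N>0$.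
   Context: $I$ denotes the $k\times k$ identity. For symmetric matrices, $\ge 0$ means positive semidefinite and $>0$ positive definite. *)

(* Defs.v *)
From HB Require Import structures.
From mathcomp Require Import all_boot all_order all_algebra.
From mathcomp Require Import reals.
Set Implicit Arguments. Unset Strict Implicit. Unset Printing Implicit Defensive.
Import Order.TTheory GRing.Theory Num.Theory.
Local Open Scope ring_scope.

Definition symmx (R : realType) (m : nat) (A : 'M[R]_m) : Prop := A^T = A.

Definition psdmx (R : realType) (m : nat) (A : 'M[R]_m) : Prop :=
  symmx A /\ forall x : 'cV[R]_m, 0 <= (x^T *m A *m x) ord0 ord0.

Definition pdmx (R : realType) (m : nat) (A : 'M[R]_m) : Prop :=
  symmx A /\ forall x : 'cV[R]_m, x != 0 -> 0 < (x^T *m A *m x) ord0 ord0.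

Definition ndmx (R : realType) (m : nat) (A : 'M[R]_m) : Prop := pdmx (- A).

Definition IZ (R : realType) (k n : nat) (Z : 'M[R]_(n, k)) : 'M[R]_(k + n, k) :=
  col_mx 1%:M Z.

Definition SN (R : realType) (k n : nat) (N : 'M[R]_(k + n)) (Z : 'M[R]_(n, k)) : Prop :=
  psdmx ((IZ Z)^T *m N *m IZ Z).

(* Main.v *)
Require Import Defs.
From HB Require Import structures.
From mathcomp Require Import all_boot all_order all_algebra.
From mathcomp Require Import reals.
From mathcomp Require Import all_classical all_reals all_analysis.
From mathcomp Require Import ring lra.
Set Implicit Arguments. Unset Strict Implicit. Unset Printing Implicit Defensive.
Import Order.TTheory GRing.Theory Num.Theory.
Import numFieldNormedType.Exports.
Local Open Scope classical_set_scope.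
Local Open Scope ring_scope.

Definition qf (R : realType) m (A : 'M[R]_m) (v : 'rV[R]_m) : R :=
  (v *m A *m v^T) ord0 ord0.
Lemma qfE (R : realType) m (A : 'M[R]_m) (v : 'rV[R]_m) :
  qf A v = \sum_i \sum_j v ord0 i * A i j * v ord0 j.
Proof.
rewrite /qf mxE; under eq_bigr => j _ do rewrite mxE big_distrl.
rewrite exchange_big; apply: eq_bigr => i _; apply: eq_bigr => j _.
by rewrite !mxE.
Qed.
Lemma cont_sum (R : realType) m (I : Type) (s : seq I) (F : I -> 'rV[R]_m -> R) :
  (forall i, continuous (F i)) -> continuous (fun v => \sum_(i <- s) F i v).
Proof.
move=> HF x; elim: s => [|i s IH].
  have -> : (fun v => \sum_(i <- [::]) F i v) = (fun=> 0).
    by apply: funext => v; rewrite big_nil.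
  exact: cst_continuous.
have -> : (fun v => \sum_(j <- i :: s) F j v) =
   (fun v => F i v + \sum_(j <- s) F j v).
  by apply: funext => v; rewrite big_cons.
exact: (continuousD (HF i x) IH).
Qed.

Lemma qf_cont (R : realType) m (A : 'M[R]_m) : continuous (qf A).
Proof.
have -> : qf A = (fun v => \sum_i \sum_j v ord0 i * A i j * v ord0 j).
  by apply: funext => v; rewrite qfE.
apply: cont_sum => i; apply: cont_sum => j x.
have c1 := @coord_continuous R 1 m ord0 i x.
have c2 := @coord_continuous R 1 m ord0 j x.
have c3 := continuousM c1 (@cst_continuous _ R (A i j) x).
exact: (continuousM c3 c2).
Qed.

Lemma qf1 (R : realType) m (v : 'rV[R]_m) : qf 1%:M v = \sum_i v ord0 i ^+ 2.
Proof.
by rewrite /qf mulmx1 mxE; apply: eq_bigr => i _; rewrite mxE expr2.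
Qed.

Lemma qfZ (R : realType) m (A : 'M[R]_m) c (v : 'rV[R]_m) :
  qf A (c *: v) = c ^+ 2 * qf A v.
Proof.
rewrite !qfE mulr_sumr; apply: eq_bigr => i _; rewrite mulr_sumr.
apply: eq_bigr => j _; rewrite !mxE; ring.
Qed.

Lemma qf1_ge (R : realType) m (v : 'rV[R]_m) i : v ord0 i ^+ 2 <= qf 1%:M v.
Proof.
rewrite qf1 (bigD1 i) //= lerDl; apply: sumr_ge0 => j _; exact: sqr_ge0.
Qed.

Lemma qf1_ge0 (R : realType) m (v : 'rV[R]_m) : 0 <= qf 1%:M v.
Proof. by rewrite qf1; apply: sumr_ge0 => j _; exact: sqr_ge0. Qed.

Lemma qf1_gt0 (R : realType) m (v : 'rV[R]_m) : v != 0 -> 0 < qf 1%:M v.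
Proof.
move=> vn0; rewrite lt_neqAle qf1_ge0 andbT; apply/eqP => H.
move/eqP: vn0; apply; apply/rowP => i; rewrite mxE.
have := qf1_ge v i; rewrite -H => h.
by apply/eqP; rewrite -sqrf_eq0 eq_le h sqr_ge0.
Qed.

Lemma qf0 (R : realType) m (A : 'M[R]_m) : qf A 0 = 0.
Proof. by rewrite /qf mul0mx mul0mx mxE. Qed.

Lemma qf_min (R : realType) m (A B : 'M[R]_m) (w : 'rV[R]_m) :
  w != 0 -> 0 <= qf B w ->
  exists v0, [/\ qf 1%:M v0 = 1, 0 <= qf B v0 &
    forall v, 0 <= qf B v -> qf A v0 * qf 1%:M v <= qf A v].
Proof.
move=> wn0 Bw.
pose K := [set v : 'rV[R]_m | qf 1%:M v = 1 /\ 0 <= qf B v].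
have nrm v : v != 0 -> 0 <= qf B v -> K ((Num.sqrt (qf 1%:M v))^-1 *: v).
  move=> vn0 Bv; have h := qf1_gt0 vn0.
  rewrite /K /= !qfZ exprVn (sqr_sqrtr (ltW h)) mulVf ?gt_eqF //; split => //.
  by rewrite mulr_ge0 // invr_ge0 ltW.
have K0 : K !=set0 by exists ((Num.sqrt (qf 1%:M w))^-1 *: w); exact: nrm.
have Kc : compact K.
  apply: bounded_closed_compact.
    exists 1; split => // M M1 v [Hv _].
    rewrite /Num.norm /= mx_normrE; apply: bigmax_le => [|ij _]; first lra.
    have := qf1_ge v ij.2; rewrite Hv (ord1 ij.1) => h.
    have : `|v ord0 ij.2| <= 1.
      rewrite -(@ler_pXn2r _ 2) ?nnegrE //= ?normr_ge0 // expr1n real_normK //.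
      exact: num_real.
    lra.
  apply: closedI.
    apply: (@preimage_closed _ _ (qf 1%:M) [set 1]).
      by move=> x _; apply: qf_cont.
    exact: closed_eq.
  apply: (@preimage_closed _ _ (qf B) [set x | 0 <= x]).
    by move=> x _; apply: qf_cont.
  exact: closed_ge.
have [v0 v0K v0min] := EVT_min_rV K0 Kc (continuous_subspaceT (@qf_cont _ _ A)).
move/set_mem: v0K => [v01 v0B].
exists v0; split => // v Bv.
have [->|vn0] := eqVneq v 0; first by rewrite !qf0 mulr0.
have c0 := qf1_gt0 vn0.
have := v0min _ (mem_set (nrm v vn0 Bv)).
rewrite qfZ exprVn (sqr_sqrtr (ltW c0)) => h.
by rewrite -ler_pdivlMr // mulrC.
Qed.

Definition bil (R : realType) m (A : 'M[R]_m) (a b : 'rV[R]_m) : R :=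
  (a *m A *m b^T) ord0 ord0.

Section QF.
Variable R : realType.
Variable m : nat.
Implicit Types (A B X : 'M[R]_m) (a b u v : 'rV[R]_m).

Lemma qfD X a b : qf X (a + b) = qf X a + qf X b + bil X a b + bil X b a.
Proof.
rewrite /qf /bil [(a + b)^T]linearD /= !(mulmxDl, mulmxDr) !mxE.
ring.
Qed.

Lemma bilC X a b : X^T = X -> bil X b a = bil X a b.
Proof.
move=> XT; rewrite /bil.
have <- : (b *m X *m a^T)^T = a *m X *m b^T by rewrite !trmx_mul trmxK XT mulmxA.
by rewrite [RHS]mxE.
Qed.

Lemma bilZl X s a b : bil X (s *: a) b = s * bil X a b.
Proof. by rewrite /bil -!scalemxAl mxE. Qed.

Lemma bilZr X s a b : bil X a (s *: b) = s * bil X a b.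
Proof. by rewrite /bil [(s *: b)^T]linearZ /= -scalemxAr mxE. Qed.

Lemma qfDm A B v : qf (A + B) v = qf A v + qf B v.
Proof. by rewrite /qf mulmxDr mulmxDl mxE. Qed.

Lemma qfZm s A v : qf (s *: A) v = s * qf A v.
Proof. by rewrite /qf -scalemxAr -scalemxAl mxE. Qed.

Lemma qfNm A v : qf (- A) v = - qf A v.
Proof. by rewrite -scaleN1r qfZm mulN1r. Qed.

Lemma qfBm A B v : qf (A - B) v = qf A v - qf B v.
Proof. by rewrite qfDm qfNm. Qed.

Lemma qfT A (x : 'cV[R]_m) : (x^T *m A *m x) ord0 ord0 = qf A x^T.
Proof. by rewrite /qf trmxK. Qed.

Lemma qfN A v : qf A (- v) = qf A v.
Proof. by rewrite -scaleN1r qfZ sqrrN expr1n mul1r. Qed.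
End QF.

Lemma qf_mul (R : realType) k m (X : 'M[R]_(k, m)) (N : 'M[R]_m) (u : 'rV[R]_k) :
  qf (X *m N *m X^T) u = qf N (u *m X).
Proof. by rewrite /qf trmx_mul !mulmxA. Qed.

Lemma pairlem (R : realType) m (A B : 'M[R]_m) u w :
  (forall v, v != 0 -> qf B v = 0 -> 0 < qf A v) ->
  qf B u < 0 -> 0 < qf B w -> qf A w * qf B u <= qf A u * qf B w.
Proof.
move=> H gu0 gw0; rewrite leNgt; apply/negP => hlt.
set gu := qf B u in gu0 hlt *; set gw := qf B w in gw0 hlt *.
set fu := qf A u in hlt *; set fw := qf A w in hlt *.
set cB := bil B w u + bil B u w.
set cA := bil A w u + bil A u w.
set t := fw / gw.
have hu : fu - t * gu < 0.
  rewrite /t subr_lt0 mulrAC ltr_pdivlMr //.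
set cA' := cA - t * cB.
set D := cB ^+ 2 - 4 * gu * gw.
have ggw : gu * gw < 0 by rewrite nmulr_rlt0.
have D0 : 0 < D by rewrite /D; have := sqr_ge0 cB; nra.
set S := Num.sqrt D.
have S2 : S ^+ 2 = D by rewrite sqr_sqrtr // ltW.
have S0 : 0 <= S by apply: sqrtr_ge0.
have hcS : `|cB| < S.
  rewrite /S -sqrtr_sqr ltr_sqrt //; rewrite /D; lra.
move: hcS; rewrite ltr_norml => /andP[hc1 hc2].
have Sgt1 : 0 < - cB + S by lra.
have Sgt2 : - cB - S < 0 by lra.
have gun0 : gu != 0 by rewrite lt_eqF.
have [s [hs1 hs2]] : exists s, (2 * gu * s + cB) ^+ 2 = D /\ s * cA' <= 0.
  have [hc|hc] := leP 0 cA'.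
    exists ((- cB + S) / (2 * gu)); split.
      have -> : 2 * gu * ((- cB + S) / (2 * gu)) = - cB + S by field.
      by have -> : - cB + S + cB = S by ring.
    rewrite nmulr_rle0 // pmulr_rlt0 // invr_lt0; lra.
  exists ((- cB - S) / (2 * gu)); split.
    have -> : 2 * gu * ((- cB - S) / (2 * gu)) = - cB - S by field.
    have -> : - cB - S + cB = - S by ring.
    by rewrite sqrrN.
  rewrite pmulr_rle0 ?nmulr_rgt0 ?invr_lt0; lra.
pose v := w + s *: u.
have qBv : qf B v = gw + s ^+ 2 * gu + s * cB.
  by rewrite /v qfD qfZ bilZl bilZr /cB -/gw -/gu; ring.
have qBv0 : qf B v = 0.
  have : 4 * gu * qf B v = (2 * gu * s + cB) ^+ 2 - D by rewrite qBv /D; ring.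
  rewrite hs1 subrr => /eqP; rewrite !mulf_eq0 (negbTE gun0) pnatr_eq0 /=.
  by move/eqP.
have qAv : qf A v = fw + s ^+ 2 * fu + s * cA.
  by rewrite /v qfD qfZ bilZl bilZr /cA -/fw -/fu; ring.
have gwn0 : gw != 0 by rewrite gt_eqF.
have qAle : qf A v <= 0.
  have -> : qf A v = s ^+ 2 * (fu - t * gu) + s * cA' + (fw - t * gw) + t * qf B v.
    by rewrite qAv qBv /cA'; ring.
  have -> : fw - t * gw = 0 by rewrite /t divfK // subrr.
  rewrite qBv0 mulr0 !addr0.
  have : s ^+ 2 * (fu - t * gu) <= 0 by apply: mulr_ge0_le0; [exact: sqr_ge0|exact: ltW].
  lra.
have vn0 : v != 0.
  apply/negP => /eqP v0; move: v0; rewrite /v => /eqP; rewrite addr_eq0 => /eqP hw.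
  have : gw <= 0.
    by rewrite /gw hw qfN qfZ; apply: mulr_ge0_le0; [exact: sqr_ge0|exact: ltW].
  lra.
have := H v vn0 qBv0; lra.
Qed.

Lemma slemma (R : realType) m (A B : 'M[R]_m) :
  (forall v, v != 0 -> 0 <= qf B v -> 0 < qf A v) ->
  (exists w, 0 < qf B w) ->
  exists a, 0 <= a /\ forall v, v != 0 -> 0 < qf (A - a *: B) v.
Proof.
move=> H [w0 Bw0].
have w0n0 : w0 != 0 by apply/negP => /eqP h; move: Bw0; rewrite h qf0 ltxx.
have [v0 [v01 v0B v0min]] := @qf_min _ _ A B w0 w0n0 (ltW Bw0).
have v0n0 : v0 != 0.
  by apply/negP => /eqP h; move: v01; rewrite h qf0 => /esym/eqP; rewrite oner_eq0.
set e := qf A v0 in v0min.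
have e0 : 0 < e := H v0 v0n0 v0B.
pose A' := A - (e / 2) *: 1%:M.
have fE v : qf A' v = qf A v - e / 2 * qf 1%:M v by rewrite qfBm qfZm.
have Hf v : v != 0 -> 0 <= qf B v -> 0 < qf A' v.
  move=> vn0 Bv; have h1 := v0min v Bv; have h2 := qf1_gt0 vn0.
  rewrite fE; have : 0 < e * qf 1%:M v by rewrite mulr_gt0.
  lra.
have Hf0 v : v != 0 -> qf B v = 0 -> 0 < qf A' v.
  by move=> vn0 Bv; apply: Hf => //; rewrite Bv.
have pr u w : qf B u < 0 -> 0 < qf B w -> qf A' u / qf B u <= qf A' w / qf B w.
  move=> gu gw; have := pairlem Hf0 gu gw.
  rewrite ler_pdivlMr // mulrAC ler_ndivrMr //.
pose E := [set r : R | r = 0 \/ exists2 u, qf B u < 0 & r = qf A' u / qf B u].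
have Eub w : 0 < qf B w -> ubound E (qf A' w / qf B w).
  move=> gw r [->|[u gu ->]]; last exact: pr.
  by rewrite divr_ge0 // ?ltW // Hf // ?ltW //; apply/negP => /eqP h; move: gw; rewrite h qf0 ltxx.
have hsup : has_sup E.
  split; first by exists 0; left.
  by exists (qf A' w0 / qf B w0); apply: Eub.
set a := sup E.
have a0 : 0 <= a by apply: sup_upper_bound => //; left.
exists a; split => // v vn0.
have : 0 <= qf A' v - a * qf B v.
  have [gv|gv|gv] := ltgtP (qf B v) 0.
  - have : qf A' v / qf B v <= a by apply: sup_upper_bound => //; right; exists v.
    rewrite ler_ndivrMr //; lra.
  - have : a <= qf A' v / qf B v by apply: ge_sup => //; [exists 0; left | exact: Eub].
    rewrite ler_pdivlMr //; lra.
  - by rewrite gv mulr0 subr0 ltW // Hf0.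
rewrite fE => h; rewrite qfBm qfZm.
have : 0 < e / 2 * qf 1%:M v by rewrite mulr_gt0 // ?divr_gt0 // qf1_gt0.
lra.
Qed.

Lemma qf0m (R : realType) m (v : 'rV[R]_m) : qf 0 v = 0.
Proof. by rewrite /qf mulmx0 mul0mx mxE. Qed.

Lemma qf0m_ge (R : realType) m (v : 'rV[R]_m) : 0 <= qf 0 v.
Proof. by rewrite qf0m. Qed.

Lemma ndlemma (R : realType) m (A B : 'M[R]_m) :
  (forall v, v != 0 -> qf B v < 0) ->
  exists a, 0 <= a /\ forall v, v != 0 -> 0 < qf (A - a *: B) v.
Proof.
move=> H; have [[w wn0]|nw] := pselect (exists w : 'rV[R]_m, w != 0); last first.
  by exists 0; split => // v vn0; exfalso; apply: nw; exists v.
have [v0 [v01 _ v0min]] := @qf_min _ _ A 0 w wn0 (qf0m_ge _).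
have [v1 [v11 _ v1min]] := @qf_min _ _ (- B) 0 w wn0 (qf0m_ge _).
have v1n0 : v1 != 0.
  by apply/negP => /eqP h; move: v11; rewrite h qf0 => /esym/eqP; rewrite oner_eq0.
set mu := qf A v0 in v0min; set q := qf (- B) v1 in v1min.
have q0 : 0 < q by rewrite /q qfNm oppr_gt0 H.
exists ((1 + `|mu|) / q); split; first by rewrite divr_ge0 // ?ltW // addr_ge0.
move=> v vn0.
have h1 := v0min v (qf0m_ge _).
have h2 := v1min v (qf0m_ge _).
have s0 := qf1_gt0 vn0.
rewrite qfBm qfZm; rewrite qfNm in h2.
set s := qf 1%:M v in h1 h2 s0 *.
have h3 : (1 + `|mu|) / q * (q * s) <= (1 + `|mu|) / q * (- qf B v).
  by apply: ler_wpM2l => //; rewrite divr_ge0 // ?ltW // addr_ge0.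
have e3 : (1 + `|mu|) / q * (q * s) = (1 + `|mu|) * s.
  by field; rewrite gt_eqF.
rewrite e3 in h3.
have : - `|mu| <= mu by apply: lerNnormlW.
nra.
Qed.

Lemma psd_ker (R : realType) k (X : 'M[R]_k) (x : 'rV[R]_k) :
  X^T = X -> (forall w, 0 <= qf X w) -> qf X x = 0 -> x *m X = 0.
Proof.
move=> XT Xpsd qx; apply/eqP; apply/negPn/negP => yn0.
set y := x *m X in yn0.
have s0 := qf1_gt0 yn0.
have K0 := Xpsd y.
set s := qf 1%:M y in s0; set K := qf X y in K0.
have bxy : bil X x y = s by rewrite /bil /s /qf mulmx1.
pose t := - s / (K + 1).
have := Xpsd (x + t *: y).
rewrite qfD qfZ bilZr bilZl.
rewrite (@bilC _ _ X x y XT) bxy qx -/K.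
have e : (K + 1) ^+ 2 * (0 + t ^+ 2 * K + t * s + t * s) = - s ^+ 2 * (K + 2).
  by rewrite /t; field; rewrite gt_eqF // ltr_wpDl.
move=> h.
have : 0 <= (K + 1) ^+ 2 * (0 + t ^+ 2 * K + t * s + t * s) by rewrite mulr_ge0 // sqr_ge0.
rewrite e; have : 0 < s ^+ 2 * (K + 2) by rewrite mulr_gt0 ?exprn_gt0 // ltr_wpDl.
lra.
Qed.

Definition EW (R : realType) k n (W : 'M[R]_(k, n)) : 'M[R]_(k, k + n) :=
  row_mx 1%:M W.

Lemma uEW (R : realType) k n (W : 'M[R]_(k, n)) (u : 'rV[R]_k) :
  u *m EW W = row_mx u (u *m W).
Proof. by rewrite /EW mul_mx_row mulmx1. Qed.

Lemma CS (R : realType) k (X : 'M[R]_k) (u x : 'rV[R]_k) :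
  X^T = X -> (forall w, 0 <= qf X w) -> 0 < qf X x ->
  bil X u x ^+ 2 <= qf X u * qf X x.
Proof.
move=> XT Xpsd cx.
set b := bil X u x; set c := qf X x.
have := Xpsd (u + (- b / c) *: x).
rewrite qfD qfZ bilZr bilZl (@bilC _ _ X u x XT) -/b -/c.
have e : qf X u + (- b / c) ^+ 2 * c + - b / c * b + - b / c * b = qf X u - b ^+ 2 / c.
  by field; rewrite gt_eqF.
rewrite e subr_ge0 ler_pdivrMr //.
Qed.

Section Block.
Variables (R : realType) (k n : nat) (N : 'M[R]_(k + n)).
Hypothesis NT : N^T = N.
Let N11 := ulsubmx N.
Let N12 := ursubmx N.
Let N21 := dlsubmx N.
Let N22 := drsubmx N.

Lemma rowN (x : 'rV[R]_k) (y : 'rV[R]_n) :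
  row_mx x y *m N = row_mx (x *m N11 + y *m N21) (x *m N12 + y *m N22).
Proof. by rewrite -{1}[N]submxK mul_row_block. Qed.

Lemma qf_x0 (x : 'rV[R]_k) : qf N (row_mx x 0) = qf N11 x.
Proof.
by rewrite /qf rowN !mul0mx !addr0 tr_row_mx trmx0 mul_row_col mulmx0 addr0.
Qed.

Lemma qf_0y (y : 'rV[R]_n) : qf N (row_mx 0 y) = qf N22 y.
Proof.
by rewrite /qf rowN !mul0mx !add0r tr_row_mx trmx0 mul_row_col mulmx0 add0r.
Qed.

Lemma N11T : N11^T = N11.
Proof. by rewrite /N11 trmx_ulsub NT. Qed.

Lemma N22T : N22^T = N22.
Proof. by rewrite /N22 trmx_drsub NT. Qed.

Variable W0 : 'M[R]_(k, n).
Hypothesis W0N : W0 *m N22 = - N12.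

Lemma bil_key (x : 'rV[R]_k) (d : 'rV[R]_n) :
  bil N (row_mx x (x *m W0)) (row_mx 0 d) = 0.
Proof.
rewrite /bil rowN -[x *m W0 *m N22]mulmxA W0N mulmxN addrN tr_row_mx trmx0 mul_row_col.
by rewrite mulmx0 mul0mx addr0 mxE.
Qed.

Lemma qf_key (x : 'rV[R]_k) (d : 'rV[R]_n) :
  qf N (row_mx x (x *m W0 + d)) = qf N (row_mx x (x *m W0)) + qf N22 d.
Proof.
have -> : row_mx x (x *m W0 + d) = row_mx x (x *m W0) + row_mx 0 d.
  by rewrite add_row_mx addr0.
by rewrite qfD bil_key (@bilC _ _ N _ _ NT) bil_key qf_0y !addr0.
Qed.

Lemma qf_W0 (x : 'rV[R]_k) :
  qf N (row_mx x (x *m W0)) = qf N11 x - qf N22 (x *m W0).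
Proof.
have := qf_key x (- (x *m W0)); rewrite addrN qf_x0 qfN => ->; ring.
Qed.

Hypothesis N11psd : forall w, 0 <= qf N11 w.
Hypothesis N22nd : forall y, y != 0 -> qf N22 y < 0.
Hypothesis Nunit : N \in unitmx.

Lemma N22le (y : 'rV[R]_n) : qf N22 y <= 0.
Proof.
have [->|yn0] := eqVneq y 0; first by rewrite qf0.
exact: ltW (N22nd yn0).
Qed.

Lemma P_ge0 (x : 'rV[R]_k) : 0 <= qf N (row_mx x (x *m W0)).
Proof. by rewrite qf_W0 subr_ge0 (le_trans (N22le _)). Qed.

Lemma P_gt0 (x : 'rV[R]_k) : x != 0 -> 0 < qf N (row_mx x (x *m W0)).
Proof.
move=> xn0; rewrite lt_neqAle P_ge0 andbT; apply/negP => /eqP h.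
move: (h); rewrite qf_W0 => h2.
have h3 := N11psd x; have h4 := N22le (x *m W0).
have q11 : qf N11 x = 0 by lra.
have q22 : qf N22 (x *m W0) = 0 by lra.
have xW0 : x *m W0 = 0.
  by apply/eqP; apply/negPn/negP => hn; move: (N22nd hn); rewrite q22 ltxx.
have xN11 : x *m N11 = 0 by apply: psd_ker => //; exact: N11T.
have xN12 : x *m N12 = 0 by rewrite -[N12]opprK -W0N mulmxN mulmxA xW0 mul0mx oppr0.
have v0 : row_mx x 0 *m N = 0 by rewrite rowN xN11 xN12 !mul0mx !addr0 row_mx0.
have : row_mx x (0 : 'rV[R]_n) = 0 by rewrite -[row_mx x 0](mulmxK Nunit) v0 mul0mx.
move/eqP; rewrite -row_mx0 => /eqP /eq_row_mx [hx _].
by move: xn0; rewrite hx eqxx.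
Qed.

Lemma exists_W (x : 'rV[R]_k) (y : 'rV[R]_n) : x != 0 ->
  0 <= qf N (row_mx x y) ->
  exists W : 'M[R]_(k, n), x *m W = y /\ forall u, 0 <= qf N (u *m EW W).
Proof.
move=> xn0 Hy.
pose P := EW W0 *m N *m (EW W0)^T.
have qP u : qf P u = qf N (row_mx u (u *m W0)) by rewrite /P qf_mul uEW.
have PT : P^T = P by rewrite /P !trmx_mul trmxK NT mulmxA.
have Ppsd w : 0 <= qf P w by rewrite qP P_ge0.
set c := qf P x.
have c0 : 0 < c by rewrite /c qP P_gt0.
pose d := y - x *m W0.
pose D := c^-1 *: ((P *m x^T) *m d).
have sc (u : 'rV[R]_k) : u *m D = (c^-1 * bil P u x) *: d.
  rewrite /D -scalemxAr (mulmxA u (P *m x^T) d) (mulmxA u P x^T) (mx11_scalar (u *m P *m x^T)) mul_scalar_mx scalerA.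
  by rewrite /bil.
have hy : y = x *m W0 + d by rewrite /d addrC subrK.
have cd : 0 <= c + qf N22 d by rewrite /c qP -qf_key -hy.
exists (W0 + D); split.
  rewrite mulmxDr sc -/c mulVf ?gt_eqF // scale1r /d addrC subrK //.
move=> u; rewrite uEW mulmxDr qf_key -qP sc qfZ.
have h1 := CS u PT Ppsd c0.
set b := bil P u x in h1 *.
have h2 : (c^-1 * b) ^+ 2 * (- c) <= (c^-1 * b) ^+ 2 * qf N22 d.
  by apply: ler_wpM2l; [exact: sqr_ge0|lra].
have e : (c^-1 * b) ^+ 2 * (- c) = - (b ^+ 2 / c) by field; rewrite gt_eqF.
rewrite e in h2.
have : b ^+ 2 / c <= qf P u by rewrite ler_pdivrMr.
lra.
Qed.

End Block.

Lemma IZT (R : realType) k n (Z : 'M[R]_(n, k)) : (IZ Z)^T = EW Z^T.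
Proof. by rewrite /IZ /EW tr_col_mx trmx1. Qed.

Lemma FZ_eq (R : realType) k n (Z : 'M[R]_(n, k)) (A : 'M[R]_(k + n)) :
  (IZ Z)^T *m A *m IZ Z = EW Z^T *m A *m (EW Z^T)^T.
Proof. by rewrite -IZT trmxK. Qed.

Lemma qfT' (R : realType) m (A : 'M[R]_m) (x : 'cV[R]_m) :
  (x^T *m A *m x) ord0 ord0 = qf A x^T.
Proof. by rewrite /qf trmxK. Qed.

Lemma pd_of_qf (R : realType) m (A : 'M[R]_m) :
  A^T = A -> (forall v, v != 0 -> 0 < qf A v) -> pdmx A.
Proof.
move=> AT H; split => // x xn0; rewrite qfT'; apply: H.
by rewrite trmx_eq0.
Qed.

Lemma EW_sym (R : realType) k m (W : 'M[R]_(k, m)) (A : 'M[R]_(k + m)) :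
  A^T = A -> (EW W *m A *m (EW W)^T)^T = EW W *m A *m (EW W)^T.
Proof. by move=> AT; rewrite !trmx_mul trmxK AT mulmxA. Qed.

Local Close Scope classical_set_scope.
Unset Implicit Arguments.

Theorem corollary2 (R : realType) (k n : nat) (M N : 'M[R]_(k + n)) :
  symmx M -> symmx N ->
  N \in unitmx ->
  psdmx (ulsubmx N) ->
  ndmx (drsubmx N) ->
  ((forall Z : 'M[R]_(n, k), SN N Z -> pdmx ((IZ Z)^T *m M *m IZ Z)) <->
   (exists alpha : R, 0 <= alpha /\ pdmx (M - alpha *: N))).
Proof.
move=> MT NT Nu [_ N11p] [_ N22p].
have N11psd w : 0 <= qf (ulsubmx N) w by have := N11p w^T; rewrite qfT' trmxK.
have N22nd y : y != 0 -> qf (drsubmx N) y < 0.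
  move=> yn0; have := N22p y^T; rewrite qfT' trmxK qfNm oppr_gt0; apply.
  by rewrite trmx_eq0.
have N22u : drsubmx N \in unitmx.
  rewrite unitmxE unitfE; apply/negP => /det0P [v vn0 vN].
  by have := N22nd v vn0; rewrite /qf vN mul0mx mxE ltxx.
pose W0 := - (ursubmx N *m invmx (drsubmx N)).
have W0N : W0 *m drsubmx N = - ursubmx N by rewrite /W0 mulNmx mulmxKV.
split.
- move=> HZ.
  have H1 v : v != 0 -> 0 <= qf N v -> 0 < qf M v.
    move=> vn0 Nv; rewrite -(hsubmxK v) in vn0 Nv *.
    set x := lsubmx v in vn0 Nv *; set y := rsubmx v in vn0 Nv *.
    have [x0|xn0] := eqVneq x 0.
      rewrite x0 in vn0 Nv; rewrite (qf_0y N) in Nv.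
      have yn0 : y != 0 by apply: contraNneq vn0 => ->; rewrite row_mx0.
      by have := N22nd y yn0; lra.
    have [W [xW HW]] := exists_W NT W0N N11psd N22nd Nu xn0 Nv.
    have := HZ W^T.
    rewrite /SN !FZ_eq trmxK.
    case.
      split; first exact: EW_sym.
      by move=> u; rewrite qfT' qf_mul.
    move=> _ /(_ x^T); rewrite trmx_eq0 => /(_ xn0).
    by rewrite qfT' qf_mul trmxK uEW xW.
  have [[x xn0]|nx] := pselect (exists x : 'rV[R]_k, x != 0).
    have [a [a0 Ha]] : exists a, 0 <= a /\ forall v, v != 0 -> 0 < qf (M - a *: N) v.
      apply: slemma => //; exists (row_mx x (x *m W0)).
      exact: (P_gt0 NT W0N N11psd N22nd Nu xn0).
    exists a; split => //; apply: pd_of_qf => //.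
    by rewrite linearB /= linearZ /= MT NT.
  have [a [a0 Ha]] : exists a, 0 <= a /\ forall v, v != 0 -> 0 < qf (M - a *: N) v.
    apply: ndlemma => v vn0; rewrite -(hsubmxK v) in vn0 *.
    have x0 : lsubmx v = 0.
      by apply/eqP; apply/negPn/negP => h; apply: nx; exists (lsubmx v).
    rewrite x0 (qf_0y N) in vn0 *; apply: N22nd.
    by apply: contraNneq vn0 => ->; rewrite row_mx0.
  exists a; split => //; apply: pd_of_qf => //.
  by rewrite linearB /= linearZ /= MT NT.
- move=> [a [a0 [_ Hpd]]] Z [_ HS].
  rewrite FZ_eq; apply: pd_of_qf; first exact: EW_sym.
  move=> u un0; rewrite qf_mul.
  have hN : 0 <= qf N (u *m EW Z^T).
    by have := HS u^T; rewrite qfT' FZ_eq qf_mul trmxK.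
  have hv : u *m EW Z^T != 0.
    by rewrite uEW; apply: contraNneq un0 => /eqP; rewrite -row_mx0 => /eqP/eq_row_mx [-> _].
  have := Hpd (u *m EW Z^T)^T; rewrite trmx_eq0 => /(_ hv).
  rewrite qfT' trmxK qfBm qfZm.
  have : 0 <= a * qf N (u *m EW Z^T) by rewrite mulr_ge0.
  lra.
Qed.
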